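(* Let $(M,g)$ be a connected compact Riemannian manifold, and let $d$ be a metric on $M$ (not necessarily induced by $g$). Let $X$ be a random variable with values in $M$ and let $f:M\to[0,\infty)$ be continuous with respect to $d$. Define $M_\delta := \{y\in M : f(y)>\delta\}$ for $\delta>0$ and $M_0 := \{y\in M: f(y)=0\}$. Suppose $M_0\neq\emptyset$ and that for every $\delta>0$ there exists $t_\delta>0$ such that for all $\tilde y\in M_0$, all $y\in M_\delta$ and all $t\ge t_\delta$, $$\mathbb{E}[-\ln p(X,y,t)] - \mathbb{E}[-\ln p(X,\tilde y,t)] > 0.$$ Then $E_\infty^{lower}(X)$ and $E_\infty^{upper}(X)$ are contained in $M_0$.
   Context: Heat kernel: $p(x,y,t)$ is the minimal heat kernel of $M$, the minimal solution of $\frac{\partial}{\partial t} p(x,y,t) = \frac12 \Delta_{g,x} p(x,y,t)$ with $\int_M p(x,y,t)\,dy = 1$, where $\Delta_g$ is the Laplace–Beltrami operator. For $t>0$, the diffusion $t$-mean set is $E_t(X) = \operatorname{argmin}_{y\in M} \mathbb{E}[-\ln p(X,y,t)]$. Kuratowski limits in $(M,d)$: for sets $A_k\subseteq M$, $\mathrm{Li}_{k\to\infty} A_k$ is the set of points $x$ for which there exist $x_k\in A_k$ with $x_k\to x$; $\mathrm{Ls}_{k\to\infty}A_k$ is the set of points $x$ for which there exist strictly increasing indices $(k_j)$ and $x_{k_j}\in A_{k_j}$ with $x_{k_j}\to x$. Then $E_\infty^{lower}(X) := \bigcap \mathrm{Li}_{k\to\infty} E_{t_k}(X)$ and $E_\infty^{upper}(X)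 := \bigcap \mathrm{Ls}_{k\to\infty} E_{t_k}(X)$, the intersections over all monotone increasing sequences $0<t_k\to\infty$, with convergence in $d$. *)

(* Defs.v *)
From HB Require Import structures.
From mathcomp Require Import all_boot all_order all_algebra.
From mathcomp Require Import all_classical all_reals all_analysis.
Set Implicit Arguments. Unset Strict Implicit. Unset Printing Implicit Defensive.
Import Order.TTheory GRing.Theory Num.Theory.
Import numFieldNormedType.Exports.
Local Open Scope classical_set_scope.
Local Open Scope ring_scope.

Definition is_metric (R : realType) (M : Type) (dist : M -> M -> R) : Prop :=
  (forall x y, 0 <= dist x y) /\ (forall x y, dist x y = 0 <-> x = y) /\
  (forall x y, dist x y = dist y x) /\
  (forall x y z, dist x z <= dist x y + dist y z).

Definition dcvg (R : realType) (M : Type) (dist : M -> M -> R)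
  (u : nat -> M) (x : M) : Prop :=
  forall e : R, 0 < e -> exists N : nat, forall k : nat, (N <= k)%N -> dist (u k) x < e.

Definition dcontinuous (R : realType) (M : Type) (dist : M -> M -> R)
  (f : M -> R) : Prop :=
  forall x (e : R), 0 < e -> exists del : R, 0 < del /\
    forall y, dist x y < del -> `|f y - f x| < e.

Definition kLi (R : realType) (M : Type) (dist : M -> M -> R)
  (A : nat -> set M) : set M :=
  [set x | exists u : nat -> M, (forall k, A k (u k)) /\ dcvg dist u x].

Definition kLs (R : realType) (M : Type) (dist : M -> M -> R)
  (A : nat -> set M) : set M :=
  [set x | exists (kj : nat -> nat) (u : nat -> M),
     (forall j, (kj j < kj j.+1)%N) /\ (forall j, A (kj j) (u j)) /\ dcvg dist u x].

Definition time_seq (R : realType) (t : nat -> R) : Prop :=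
  (forall k, 0 < t k) /\ (forall k, t k <= t k.+1) /\
  (forall b : R, exists N : nat, forall k, (N <= k)%N -> b < t k).

Definition heat_loss (R : realType) (dO : measure_display) (Omega : measurableType dO)
  (M : Type) (P : probability Omega R) (X : Omega -> M) (p : M -> M -> R -> R)
  (y : M) (t : R) : \bar R :=
  (\int[P]_w (- ln (p (X w) y t))%:E)%E.

Definition diffusion_mean (R : realType) (dO : measure_display) (Omega : measurableType dO)
  (M : Type) (P : probability Omega R) (X : Omega -> M) (p : M -> M -> R -> R)
  (t : R) : set M :=
  [set y | forall z, (heat_loss P X p y t <= heat_loss P X p z t)%E].

Definition E_inf_lower (R : realType) (dO : measure_display) (Omega : measurableType dO)
  (M : Type) (dist : M -> M -> R) (P : probability Omega R) (X : Omega -> M)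
  (p : M -> M -> R -> R) : set M :=
  [set x | forall t : nat -> R, time_seq t ->
     kLi dist (fun k => diffusion_mean P X p (t k)) x].

Definition E_inf_upper (R : realType) (dO : measure_display) (Omega : measurableType dO)
  (M : Type) (dist : M -> M -> R) (P : probability Omega R) (X : Omega -> M)
  (p : M -> M -> R -> R) : set M :=
  [set x | forall t : nat -> R, time_seq t ->
     kLs dist (fun k => diffusion_mean P X p (t k)) x].

(* Main.v *)
Require Import Defs.
From HB Require Import structures.
From mathcomp Require Import all_boot all_order all_algebra.
From mathcomp Require Import all_classical all_reals all_analysis.
From mathcomp Require Import lra.
Import Order.TTheory GRing.Theory Num.Theory.
Local Open Scope classical_set_scope.
Local Open Scope ring_scope.

Theorem lemma2p7 (R : realType) (dO : measure_display) (Omega : measurableType dO)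
  (dM : measure_display) (M : measurableType dM)
  (P : probability Omega R) (X : Omega -> M) (mX : measurable_fun setT X)
  (p : M -> M -> R -> R)
  (dist : M -> M -> R) (hdist : is_metric dist)
  (f : M -> R) (f_ge0 : forall y, 0 <= f y) (f_cont : dcontinuous dist f)
  (M0_ne : exists y, f y = 0)
  (H : forall del : R, 0 < del -> exists td : R, 0 < td /\
     forall (yt y : M) (t : R), f yt = 0 -> del < f y -> td <= t ->
       (0 < heat_loss P X p y t - heat_loss P X p yt t)%E) :
  E_inf_lower dist P X p `<=` [set y | f y = 0] /\
  E_inf_upper dist P X p `<=` [set y | f y = 0].
Proof.
have [_ [_ [dsym _]]] := hdist.
have [y0 fy0] := M0_ne.
have key : forall x, f x <> 0 -> exists t : nat -> R, time_seq t /\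
    exists r : R, 0 < r /\ forall k y, diffusion_mean P X p (t k) y -> ~ dist y x < r.
  move=> x fx0.
  have fxp : 0 < f x by rewrite lt_def; apply/andP; split; [apply/eqP|exact: f_ge0].
  have [td [td0 Htd]] := H (f x / 2) (divr_gt0 fxp (ltr0Sn _ 1)).
  have [r [r0 Hr]] := f_cont x (f x / 2) (divr_gt0 fxp (ltr0Sn _ 1)).
  exists (fun k => td + k%:R); split.
    split; first by move=> k; apply: ltr_pwDl.
    split; first by move=> k; rewrite lerD2l ler_nat.
    move=> b; exists (Num.truncn (b - td)).+1 => k Hk.
    have h1 := truncnS_gt (b - td).
    have h2 : ((Num.truncn (b - td)).+1%:R <= k%:R :> R) by rewrite ler_nat.
    have := lt_le_trans h1 h2; rewrite ltrBlDl //.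
  exists r; split => // k y Hy dyx.
  have := Hr y; rewrite dsym => /(_ dyx) Hf.
  have hy : f x / 2 < f y.
    move: Hf; rewrite ltr_norml => /andP[h _]; lra.
  have := Htd y0 y (td + k%:R) fy0 hy.
  rewrite lerDl ler0n => /(_ isT).
  by rewrite sube_gt0 ltNge (Hy y0).
split=> x Hx /=; have [//|/eqP fx0] := eqVneq (f x) 0; exfalso;
  have [t [ts [r [r0 Hr]]]] := key x fx0; have := Hx t ts.
- move=> [u [Hu Hc]]; have [N HN] := Hc r r0.
  exact: (Hr N (u N) (Hu N) (HN N (leqnn N))).
- move=> [kj [u [_ [Hu Hc]]]]; have [N HN] := Hc r r0.
  exact: (Hr (kj N) (u N) (Hu N) (HN N (leqnn N))).
Qed.
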